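(* Let $f_0(x)=x^4+12x^3+14x^2-12x+1$ and $f_{1728}(x)=x^4+18x^3+74x^2-18x+1$, and let $l$ be a prime. (a) If $l\equiv 4\pmod 5$ and $\left(\frac{-3}{l}\right)=-1$, then $f_0(x)$ splits into distinct linear factors modulo $l$. (b) If $l\equiv 4\pmod 5$ and $\left(\frac{-4}{l}\right)=-1$, then $f_{1728}(x)$ splits into distinct linear factors modulo $l$. (c) If $l\equiv 1\pmod 5$ and $\left(\frac{-3}{l}\right)=-1$, then $f_0(x)$ factors modulo $l$ as a product of two irreducible quadratics of the form $x^2+ax-1$. (d) If $l\equiv 1\pmod 5$ and $\left(\frac{-4}{l}\right)=-1$, then $f_{1728}(x)$ factors modulo $l$ as a product of two irreducible quadratics of the form $x^2+ax-1$.
   Context: $\left(\frac{\cdot}{l}\right)$ denotes the Kronecker/Legendre symbol. *)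

(* Defs.v *)
From HB Require Import structures.
From mathcomp Require Import all_boot all_order all_algebra.
Set Implicit Arguments. Unset Strict Implicit. Unset Printing Implicit Defensive.
Import Order.TTheory GRing.Theory Num.Theory.
Local Open Scope ring_scope.

(* Legendre symbol (a / l) for a prime l (the Kronecker symbol agrees with it
   for odd primes l; the hypotheses of the theorem force l odd). *)
Definition legendre (a : int) (l : nat) : int :=
  if (l%:Z %| a)%Z then 0
  else if [exists x : 'I_l, ((x%:Z) ^+ 2 == a %[mod l%:Z])%Z] then 1 else -1.

Definition f0 (R : nzRingType) : {poly R} :=
  'X^4 + 12%:R *: 'X^3 + 14%:R *: 'X^2 - 12%:R *: 'X + 1.

Definition f1728 (R : nzRingType) : {poly R} :=
  'X^4 + 18%:R *: 'X^3 + 74%:R *: 'X^2 - 18%:R *: 'X + 1.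

Definition splits_distinct (F : fieldType) (p : {poly F}) : Prop :=
  exists rs : seq F, uniq rs /\ p = \prod_(r <- rs) ('X - r%:P).

Definition two_quad_factors (F : fieldType) (p : {poly F}) : Prop :=
  exists a b : F,
    [/\ p = ('X^2 + a *: 'X - 1) * ('X^2 + b *: 'X - 1),
        irreducible_poly ('X^2 + a *: 'X - 1) &
        irreducible_poly ('X^2 + b *: 'X - 1)].

(* Main.v *)
Require Import Defs.
From HB Require Import structures.
From mathcomp Require Import all_boot all_order all_algebra all_field.
From mathcomp Require Import ring.
Import Order.TTheory GRing.Theory Num.Theory.
Set Implicit Arguments. Unset Strict Implicit. Unset Printing Implicit Defensive.
Local Open Scope ring_scope.

Lemma eq_mod (R : comNzRingType) (x y z c : R) : x - y = c * z -> z = 0 -> x = y.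
Proof. by move=> h z0; apply/eqP; rewrite -subr_eq0 h z0 mulr0. Qed.

Section Quad.
Variable F : fieldType.
Definition Q (a : F) : {poly F} := 'X^2 + a *: 'X - 1.

Lemma XsubC_mul (r1 r2 : F) :
  ('X - r1%:P) * ('X - r2%:P) = 'X^2 - (r1 + r2)%:P * 'X + (r1 * r2)%:P.
Proof. rewrite polyCD polyCM; ring. Qed.

Lemma Q_split (a d : F) : 2 != 0 :> F -> d != 0 -> d ^+ 2 = a ^+ 2 + 4 ->
  Q a = ('X - ((d - a) / 2)%:P) * ('X - ((- d - a) / 2)%:P) /\
  (d - a) / 2 != (- d - a) / 2.
Proof.
move=> n2 nd hd.
have n4 : 4 != 0 :> F by rewrite (_ : 4 = 2 * 2 :> F) ?mulf_neq0 //; ring.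
set r1 := (d - a) / 2; set r2 := (- d - a) / 2.
have hs : r1 + r2 = - a by rewrite /r1 /r2; field; rewrite ?n2 ?n4.
have hm0 : (d - a) * (- d - a) = - 4.
  by rewrite (_ : (d - a) * (- d - a) = a ^+ 2 - d ^+ 2); [rewrite hd; ring | ring].
have hp : r1 * r2 = - 1.
  rewrite /r1 /r2 (_ : (d - a) / 2 * ((- d - a) / 2) = ((d - a) * (- d - a)) / (2 * 2)).
    by rewrite hm0; field; rewrite ?n2 ?n4.
  by field; rewrite ?n2 ?n4.
split.
  have -> : Q a = 'X^2 - (r1 + r2)%:P * 'X + (r1 * r2)%:P.
    by rewrite /Q hs hp -mul_polyC !polyCN ?polyC1 mulNr opprK.
  by rewrite XsubC_mul.
apply/eqP => h.
have : d = r1 - r2 by rewrite /r1 /r2; field; rewrite ?n2 ?n4.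
by rewrite h subrr; move/eqP; rewrite (negPf nd).
Qed.

Lemma size_Q a : size (Q a) = 3%N.
Proof.
rewrite /Q -addrA size_addl ?size_polyXn //.
rewrite (leq_ltn_trans (size_polyD _ _)) // size_polyN size_polyC oner_neq0.
by rewrite gtn_max (leq_ltn_trans (size_scale_leq _ _)) ?size_polyX.
Qed.

Lemma Q_hornerE a x : (Q a).[x] = x ^+ 2 + a * x - 1.
Proof. by rewrite /Q !hornerE. Qed.

Lemma Q_irr (a : F) : (forall d, d ^+ 2 != a ^+ 2 + 4) -> irreducible_poly (Q a).
Proof.
move=> nd; apply: cubic_irreducible; first by rewrite size_Q.
move=> x; apply/negP; rewrite /root Q_hornerE => /eqP h.
have := nd (2 * x + a); rewrite (_ : (2 * x + a) ^+ 2 = a ^+ 2 + 4 + 4 * (x ^+ 2 + a * x - 1)).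
  by rewrite h mulr0 addr0 eqxx.
by ring.
Qed.

Lemma Q_common a b r : a != b -> root (Q a) r -> root (Q b) r -> False.
Proof.
move=> nab; rewrite /root !Q_hornerE => /eqP ha /eqP hb.
have : (a - b) * r = 0.
  by rewrite (_ : (a - b) * r = (r ^+ 2 + a * r - 1) - (r ^+ 2 + b * r - 1)); [rewrite ha hb subrr | ring].
move/eqP; rewrite mulf_eq0 subr_eq0 (negPf nab) /= => /eqP r0.
by move: ha; rewrite r0 expr0n mulr0 /= add0r sub0r => /eqP; rewrite oppr_eq0 oner_eq0.
Qed.

Lemma two_split (a b : F) : 2 != 0 :> F -> a != b ->
  (exists d, d != 0 /\ d ^+ 2 = a ^+ 2 + 4) -> (exists e, e != 0 /\ e ^+ 2 = b ^+ 2 + 4) ->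
  splits_distinct (Q a * Q b).
Proof.
move=> n2 nab [d [nd hd]] [e [ne he]].
have [Ea n12] := @Q_split a d n2 nd hd; have [Eb n34] := @Q_split b e n2 ne he.
set r1 := (d - a) / 2 in Ea n12 *; set r2 := (- d - a) / 2 in Ea n12 *.
set r3 := (e - b) / 2 in Eb n34 *; set r4 := (- e - b) / 2 in Eb n34 *.
exists [:: r1; r2; r3; r4]; split; last first.
  by rewrite !big_cons big_nil mulr1 Ea Eb !mulrA.
have rA r : (r == r1) || (r == r2) -> root (Q a) r.
  by rewrite Ea rootM !root_XsubC.
have rB r : (r == r3) || (r == r4) -> root (Q b) r.
  by rewrite Eb rootM !root_XsubC.
have nc r : (r == r1) || (r == r2) -> (r == r3) || (r == r4) -> False.
  by move=> h1 h2; exact: (@Q_common a b r nab (rA r h1) (rB r h2)).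
rewrite /= !inE n34 andbT; apply/andP; split.
  rewrite (negPf n12) /=; apply/negP => /orP [] /eqP h;
  by apply: (nc r1); rewrite ?h eqxx ?orbT.
rewrite andbT; apply/negP => /orP [] /eqP h; by apply: (nc r2); rewrite ?h eqxx ?orbT.
Qed.
End Quad.

Lemma eq_mod2 (R : comNzRingType) (x y z1 z2 c1 c2 : R) :
  x - y = c1 * z1 + c2 * z2 -> z1 = 0 -> z2 = 0 -> x = y.
Proof. by move=> h e1 e2; apply/eqP; rewrite -subr_eq0 h e1 e2 !mulr0 addr0. Qed.

Lemma f0_gen (R : comNzRingType) (X G : R) : G ^+ 2 = 5 ->
  X ^+ 4 + 12 * X ^+ 3 + 14 * X ^+ 2 - 12 * X + 1 =
  (X ^+ 2 + (6 - 2 * G) * X - 1) * (X ^+ 2 + (6 + 2 * G) * X - 1).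
Proof. by move=> hG; apply: (@eq_mod _ _ _ (G ^+ 2 - 5) (4 * X ^+ 2)); [ring | rewrite hG subrr]. Qed.

Lemma f1728_gen (R : comNzRingType) (X G : R) : G ^+ 2 = 5 ->
  X ^+ 4 + 18 * X ^+ 3 + 74 * X ^+ 2 - 18 * X + 1 =
  (X ^+ 2 + (9 - G) * X - 1) * (X ^+ 2 + (9 + G) * X - 1).
Proof. by move=> hG; apply: (@eq_mod _ _ _ (G ^+ 2 - 5) (X ^+ 2)); [ring | rewrite hG subrr]. Qed.

Lemma l_gt5 l : prime l -> (l %% 5 = 4 \/ l %% 5 = 1)%N -> (5 < l)%N.
Proof.
move=> hl hm; rewrite ltnNge; apply/negP => hle.
move: hl hm hle; case: l => [|[|[|[|[|[|l]]]]]] //= _; by case.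
Qed.

Lemma natF_nz l n : prime l -> (5 < l)%N -> (0 < n <= 5)%N -> n%:R != 0 :> 'F_l.
Proof.
move=> hl l5 /andP [n0 n5]; rewrite -(dvdn_pcharf (pchar_Fp hl)).
apply/negP => /(dvdn_leq n0) h.
by move: (leq_trans h n5); rewrite leqNgt l5.
Qed.

Lemma leg_nsq l (a : nat) : prime l -> legendre (- a%:R) l = -1 ->
  forall c : 'F_l, c ^+ 2 != - a%:R.
Proof.
move=> hl; rewrite /legendre; case: ifP => // _; case: ifP => // hne _ c.
apply/negP => /eqP hc.
move/negbT: hne => /existsPn H.
have cl : (val c < l)%N by rewrite -[X in (_ < X)%N](Fp_cast hl) ltn_ord.
move: (H (Ordinal cl)); apply/negP/negPn.
rewrite eqz_mod_dvd /= opprK -!natz -natrX -natrD !natz dvdzE /=.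
rewrite (dvdn_pcharf (pchar_Fp hl)) natrD natrX (natr_Zp c) hc addNr.
by [].
Qed.

Section Main.
Variable l : nat.
Hypothesis hl : prime l.
Variable K : closedFieldType.
Variable iota : {rmorphism 'F_l -> K}.

Lemma chK : l \in [pchar K].
Proof.
apply/andP; split=> //.
by rewrite -(rmorph_nat iota) fmorph_eq0 -(dvdn_pcharf (pchar_Fp hl)) dvdnn.
Qed.

Local Notation phi := (pFrobenius_aut chK).

Lemma phi_iota (c : 'F_l) : phi (iota c) = iota c.
Proof.
by rewrite pFrobenius_autE -rmorphXn; have := expf_card c; rewrite card_Fp // => ->.
Qed.

Lemma fixed_img (x : K) : phi x = x -> exists c, x = iota c.
Proof.
rewrite pFrobenius_autE => hx.
case: (boolP (x \in [seq iota c | c <- enum 'F_l])) => [/mapP [c _ ->] | hn].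
  by exists c.
exfalso.
have l1 := prime_gt1 hl.
have sz : size ('X^l - 'X : {poly K}) = l.+1.
  by rewrite size_addl ?size_polyXn // size_polyN size_polyX ltnS.
have := @max_poly_roots _ ('X^l - 'X) (x :: [seq iota c | c <- enum 'F_l]).
rewrite sz /= size_map -cardE card_Fp // ltnn => H; suff : false by []; apply: H.
- by rewrite -size_poly_gt0 sz.
- apply/andP; split.
    by rewrite /root !hornerE hx subrr.
  apply/allP => y /mapP [c _ ->].
  rewrite /root !hornerE -rmorphXn; have := expf_card c; rewrite card_Fp // => ->; by rewrite subrr.
- by rewrite hn /= (map_inj_uniq (fmorph_inj iota)) enum_uniq.
Qed.

Lemma two_nz_K : 2 != 0 :> 'F_l -> 2 != 0 :> K.
Proof. by move=> h; rewrite -(rmorph_nat iota) fmorph_eq0. Qed.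

Lemma disc_fix (y : K) (D : 'F_l) : y ^+ 2 = iota D -> D != 0 -> phi y = y ->
  exists d, d != 0 /\ d ^+ 2 = D.
Proof.
move=> hy nD /fixed_img [d hd]; exists d; split.
  by apply: contraNneq nD => d0; apply/eqP; apply: (fmorph_inj iota); rewrite -hy hd d0 !rmorph0 expr0n.
by apply: (fmorph_inj iota); rewrite rmorphXn -hd.
Qed.

Lemma fix_anti (y : K) : 2 != 0 :> K -> phi y = y -> phi y = - y -> y = 0.
Proof.
move=> n2 h1 h2; have : y *+ 2 = 0 by rewrite mulr2n -{1}h1 h2 addNr.
by rewrite -mulr_natl => /eqP; rewrite mulf_eq0 (negPf n2) => /eqP.
Qed.

Lemma disc_anti (y : K) (D : 'F_l) : y ^+ 2 = iota D -> D != 0 -> 2 != 0 :> 'F_l ->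
  phi y = - y -> forall d, d ^+ 2 != D.
Proof.
move=> hy nD n2 hp d; apply/eqP => hd.
have n2K := two_nz_K n2.
have : (iota d - y) * (iota d + y) = 0.
  by rewrite (_ : _ * _ = iota d ^+ 2 - y ^+ 2); [rewrite -rmorphXn hd hy subrr | ring].
move/eqP; rewrite mulf_eq0 => /orP [] /eqP h.
- have ey : y = iota d by apply/eqP; rewrite eq_sym -subr_eq0 h.
  have y0 : y = 0 by apply: fix_anti => //; rewrite ey phi_iota.
  by move: nD; rewrite -(fmorph_eq0 iota) -hy y0 expr2 mulr0 eqxx.
- have ey : y = - iota d by rewrite -(subr0 y) -h; ring.
  have y0 : y = 0.
    by apply: fix_anti => //; rewrite ey pFrobenius_autN phi_iota.
  by move: nD; rewrite -(fmorph_eq0 iota) -hy y0 expr2 mulr0 eqxx.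
Qed.

Lemma final (f : {poly 'F_l}) (a b : 'F_l) (ya yb : K) :
  2 != 0 :> 'F_l -> a != b -> f = Q a * Q b -> a ^+ 2 + 4 != 0 -> b ^+ 2 + 4 != 0 ->
  ya ^+ 2 = iota (a ^+ 2 + 4) -> yb ^+ 2 = iota (b ^+ 2 + 4) ->
  (phi ya = ya -> phi yb = yb -> splits_distinct f) /\
  (phi ya = - ya -> phi yb = - yb -> two_quad_factors f).
Proof.
move=> n2 nab -> nDa nDb hya hyb; split=> ha hb.
  by apply: two_split => //; [apply: (disc_fix hya) | apply: (disc_fix hyb)].
exists a, b; split=> //; apply: Q_irr.
  exact: (disc_anti hya).
exact: (disc_anti hyb).
Qed.

Lemma phiD (x y : K) : phi (x + y) = phi x + phi y.
Proof. exact/pFrobenius_autD_comm/mulrC. Qed.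
Lemma phiB (x y : K) : phi (x - y) = phi x - phi y.
Proof. exact/pFrobenius_autB_comm/mulrC. Qed.
Lemma phiM (x y : K) : phi (x * y) = phi x * phi y.
Proof. exact/pFrobenius_autM_comm/mulrC. Qed.
Lemma phiX (x : K) n : phi (x ^+ n) = phi x ^+ n.
Proof. exact: pFrobenius_autX. Qed.
Lemma phiN (x : K) : phi (- x) = - phi x.
Proof. exact: pFrobenius_autN. Qed.
Lemma phi_nat n : phi n%:R = n%:R.
Proof. exact: pFrobenius_aut_nat. Qed.
Lemma phi1 : phi 1 = 1.
Proof. exact: pFrobenius_aut1. Qed.

Definition g5 (x : K) := x - x ^+ 2 - x ^+ 3 + x ^+ 4.
Definition u1 (x : K) := x - x ^+ 4.
Definition u2 (x : K) := x ^+ 2 - x ^+ 3.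
Definition w1 (x : K) := (x - x ^+ 4) * (x + x ^+ 4 + 1).
Definition w2 (x : K) := (x ^+ 2 - x ^+ 3) * (x ^+ 2 + x ^+ 3 + 1).

Lemma obtain_eps : exists x : K, x ^+ 4 + x ^+ 3 + x ^+ 2 + x + 1 = 0.
Proof.
have [x hx] := @solve_monicpoly K 4 (nth 0 [:: -1; -1; -1; -1]) isT.
exists x; move: hx; rewrite !big_ord_recl big_ord0 /= => ->.
rewrite /bump /=; ring.
Qed.

Lemma obtain_sqrt (c : K) : exists s : K, s ^+ 2 = c.
Proof.
have [x hx] := @solve_monicpoly K 2 (nth 0 [:: c]) isT.
exists x; move: hx; rewrite !big_ord_recl big_ord0 /= => ->.
rewrite /bump /=; ring.
Qed.

Lemma idents (x : K) : x ^+ 4 + x ^+ 3 + x ^+ 2 + x + 1 = 0 ->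
  [/\ g5 x ^+ 2 - 5 = 0, w1 x ^+ 2 + (5 + 2 * g5 x) = 0, w2 x ^+ 2 + (5 - 2 * g5 x) = 0,
      4 * u1 x ^+ 2 + (10 + 2 * g5 x) = 0 & 4 * u2 x ^+ 2 + (10 - 2 * g5 x) = 0].
Proof.
move=> hx; split.
- apply: (@eq_mod _ _ _ _ ((- 5) * 1 + (5) * x ^+ 1 + (1) * x ^+ 2 + (- 3) * x ^+ 3 + (1) * x ^+ 4) _ hx); rewrite /g5; ring.
- apply: (@eq_mod _ _ _ _ ((5) * 1 + (- 3) * x ^+ 1 + (- 3) * x ^+ 2 + (1) * x ^+ 3 + (3) * x ^+ 4 + (- 3) * x ^+ 6 + (- 1) * x ^+ 7 + (2) * x ^+ 8 + (- 1) * x ^+ 11 + (1) * x ^+ 12) _ hx); rewrite /g5 /w1; ring.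
- apply: (@eq_mod _ _ _ _ ((5) * 1 + (- 7) * x ^+ 1 + (4) * x ^+ 2 + (- 3) * x ^+ 4 + (4) * x ^+ 5 + (- 2) * x ^+ 6 + (- 1) * x ^+ 7 + (1) * x ^+ 8) _ hx); rewrite /g5 /w2; ring.
- apply: (@eq_mod _ _ _ _ ((10) * 1 + (- 8) * x ^+ 1 + (- 4) * x ^+ 3 + (4) * x ^+ 4) _ hx); rewrite /g5 /u1; ring.
- apply: (@eq_mod _ _ _ _ ((10) * 1 + (- 12) * x ^+ 1 + (4) * x ^+ 2) _ hx); rewrite /g5 /u2; ring.
Qed.

Lemma phi_pow5 (x : K) : x ^+ 5 = 1 -> phi x = x ^+ (l %% 5).
Proof.
move=> x5; rewrite pFrobenius_autE.
have -> : x ^+ l = x ^+ (5 * (l %/ 5) + l %% 5) by rewrite mulnC -divn_eq.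
by rewrite exprD exprM x5 expr1n mul1r.
Qed.

Lemma case4 (x : K) : x ^+ 5 = 1 -> phi x = x ^+ 4 ->
  [/\ phi (g5 x) = g5 x, phi (w1 x) = - w1 x, phi (w2 x) = - w2 x,
      phi (u1 x) = - u1 x & phi (u2 x) = - u2 x].
Proof.
move=> x5 hp.
have x5' : x ^+ 5 - 1 = 0 by rewrite x5 subrr.
split.
- apply: (@eq_mod _ _ _ _ ((1) * x ^+ 1 + (- 1) * x ^+ 2 + (- 1) * x ^+ 3 + (1) * x ^+ 6 + (- 1) * x ^+ 7 + (1) * x ^+ 11) _ x5'); rewrite /g5 !(phiD, phiB, phiN, phiX) hp; ring.
- apply: (@eq_mod _ _ _ _ ((- 1) * x ^+ 1 + (- 1) * x ^+ 2 + (- 1) * x ^+ 6 + (- 1) * x ^+ 7 + (- 1) * x ^+ 11 + (- 1) * x ^+ 12 + (- 1) * x ^+ 17 + (- 1) * x ^+ 22 + (- 1) * x ^+ 27) _ x5'); rewrite /w1 !(phiM, phiD, phiB, phiN, phiX) phi1 hp; ring.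
- apply: (@eq_mod _ _ _ _ ((- 1) * x ^+ 2 + (1) * x ^+ 3 + (- 1) * x ^+ 4 + (1) * x ^+ 6 + (- 1) * x ^+ 7 + (- 1) * x ^+ 9 + (1) * x ^+ 11 + (- 1) * x ^+ 14 + (- 1) * x ^+ 19) _ x5'); rewrite /w2 !(phiM, phiD, phiB, phiN, phiX) phi1 hp; ring.
- apply: (@eq_mod _ _ _ _ ((- 1) * x ^+ 1 + (- 1) * x ^+ 6 + (- 1) * x ^+ 11) _ x5'); rewrite /u1 !(phiD, phiB, phiN, phiX) hp; ring.
- apply: (@eq_mod _ _ _ _ ((- 1) * x ^+ 2 + (1) * x ^+ 3 + (- 1) * x ^+ 7) _ x5'); rewrite /u2 !(phiD, phiB, phiN, phiX) hp; ring.
Qed.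

Lemma case1 (x : K) : phi x = x ->
  [/\ phi (g5 x) = g5 x, phi (w1 x) = w1 x, phi (w2 x) = w2 x,
      phi (u1 x) = u1 x & phi (u2 x) = u2 x].
Proof.
move=> hp; split.
- by rewrite /g5 !(phiD, phiB, phiN, phiX) hp.
- by rewrite /w1 !(phiM, phiD, phiB, phiN, phiX) phi1 hp.
- by rewrite /w2 !(phiM, phiD, phiB, phiN, phiX) phi1 hp.
- by rewrite /u1 !(phiD, phiB, phiN, phiX) hp.
- by rewrite /u2 !(phiD, phiB, phiN, phiX) hp.
Qed.

Lemma sqrt_anti (m : nat) : (forall c : 'F_l, c ^+ 2 != - m%:R) ->
  forall s : K, s ^+ 2 = - m%:R -> phi s = - s.
Proof.
move=> hc s hs.
have : (phi s - s) * (phi s + s) = 0.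
  rewrite (_ : _ * _ = phi s ^+ 2 - s ^+ 2); last by ring.
  by rewrite -phiX hs phiN phi_nat subrr.
move/eqP; rewrite mulf_eq0 => /orP [] /eqP h; last by apply/eqP; rewrite -addr_eq0 h.
have fs : phi s = s by apply/eqP; rewrite -subr_eq0 h.
have [c hcs] := fixed_img fs.
exfalso; move: (hc c) => /eqP; apply.
by apply: (fmorph_inj iota); rewrite rmorphXn -hcs hs rmorphN rmorph_nat.
Qed.

Lemma common (hm : (l %% 5 = 4)%N \/ (l %% 5 = 1)%N) :
  exists x : K, exists g0 : 'F_l,
  [/\ x ^+ 5 = 1, phi x = x ^+ (l %% 5), iota g0 = g5 x, g0 ^+ 2 = 5 &
      [/\ g5 x ^+ 2 - 5 = 0, w1 x ^+ 2 + (5 + 2 * g5 x) = 0, w2 x ^+ 2 + (5 - 2 * g5 x) = 0,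
      4 * u1 x ^+ 2 + (10 + 2 * g5 x) = 0 & 4 * u2 x ^+ 2 + (10 - 2 * g5 x) = 0]].
Proof.
have [x hx] := obtain_eps.
have x5 : x ^+ 5 = 1.
  apply/eqP; rewrite -subr_eq0; apply/eqP; apply: (@eq_mod _ _ _ _ (x - 1) _ hx); ring.
have Is := idents hx; have [I1 _ _ _ _] := Is.
have px := phi_pow5 x5.
have gfix : phi (g5 x) = g5 x.
  by case: hm => e; rewrite e in px; [case: (case4 x5 px) | case: (case1 px)].
have [g0 hg0] := fixed_img gfix.
exists x, g0; split => //.
apply: (fmorph_inj iota); rewrite rmorphXn -hg0 rmorph_nat.
by apply/eqP; rewrite -subr_eq0 I1.
Qed.

Lemma part_f0 (hm : (l %% 5 = 4)%N \/ (l %% 5 = 1)%N)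
  (hleg : forall c : 'F_l, c ^+ 2 != - 3%:R) :
  ((l %% 5 = 4)%N -> splits_distinct (f0 [the fieldType of 'F_l])) /\
  ((l %% 5 = 1)%N -> two_quad_factors (f0 [the fieldType of 'F_l])).
Proof.
have l5 := l_gt5 hl hm.
have nz n : (0 < n <= 5)%N -> n%:R != 0 :> 'F_l := natF_nz hl l5.
have [x [g0 [x5 px hg0 g02 [I1 I2 I3 I4 I5]]]] := common hm.
have [s hs] := obtain_sqrt (- 3%:R).
have ps := sqrt_anti hleg hs.
have g0nz : g0 != 0.
  by apply: contra_neq (nz 5%N isT) => e; rewrite -g02 e expr2 mulr0.
pose a := 6 - 2 * g0; pose b := 6 + 2 * g0.
have n2 : 2 != 0 :> 'F_l := nz 2%N isT.
have nab : a != b.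
  apply/eqP => e; have : b - a = 4 * g0 by rewrite /a /b; ring.
  by rewrite e subrr => /esym/eqP; rewrite mulf_eq0 (negPf (nz 4%N isT)) (negPf g0nz).
have Ef : f0 [the fieldType of 'F_l] = Q a * Q b.
  have pa : (6 - 2 * g0)%:P = 6 - 2 * g0%:P :> {poly 'F_l}.
    by rewrite polyCB polyCM !polyC_natr.
  have pb : (6 + 2 * g0)%:P = 6 + 2 * g0%:P :> {poly 'F_l}.
    by rewrite [LHS]polyCD polyCM !polyC_natr.
  rewrite /f0 /Q /a /b -!mul_polyC !polyC_natr pa pb (@f0_gen _ (polyX _) (g0%:P)) //.
  by rewrite -polyC_exp g02 polyC_natr.
have n12 : 12 != 0 :> 'F_l.
  by rewrite (_ : 12 = 3 * 4 :> 'F_l) ?mulf_neq0 ?nz // -natrM.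
have e2 : (5 - 2 * g0) * (5 + 2 * g0) = 5.
  by apply: (@eq_mod _ _ _ (g0 ^+ 2 - 5) (-4)); [ring | rewrite g02 subrr].
have nDa : a ^+ 2 + 4 != 0.
  have -> : a ^+ 2 + 4 = 12 * (5 - 2 * g0).
    by apply: (@eq_mod _ _ _ (g0 ^+ 2 - 5) 4); [rewrite /a; ring | rewrite g02 subrr].
  rewrite mulf_neq0 //; apply: contra_neq (nz 5%N isT) => h.
  by rewrite -e2 h mul0r.
have nDb : b ^+ 2 + 4 != 0.
  have -> : b ^+ 2 + 4 = 12 * (5 + 2 * g0).
    by apply: (@eq_mod _ _ _ (g0 ^+ 2 - 5) 4); [rewrite /b; ring | rewrite g02 subrr].
  rewrite mulf_neq0 //; apply: contra_neq (nz 5%N isT) => h.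
  by rewrite -e2 h mulr0.
have hya : (2 * s * w2 x) ^+ 2 = iota (a ^+ 2 + 4).
  rewrite /a rmorphD rmorphXn rmorphB rmorphM !rmorph_nat hg0 !exprMn hs.
  by apply: (@eq_mod2 _ _ _ _ _ (-4) (-12) _ I1 I3); rewrite /w2 /w1 /g5; ring.
have hyb : (2 * s * w1 x) ^+ 2 = iota (b ^+ 2 + 4).
  rewrite /b rmorphD rmorphXn rmorphD rmorphM !rmorph_nat hg0 !exprMn hs.
  by apply: (@eq_mod2 _ _ _ _ _ (-4) (-12) _ I1 I2); rewrite /w2 /w1 /g5; ring.
have [H1 H2] := final n2 nab Ef nDa nDb hya hyb.
split => e; rewrite e in px.
- case: (case4 x5 px) => _ h1 h2 _ _.
  apply: H1.
    by rewrite (phiM (2 * s)) (phiM 2 s) phi_nat ps h2; ring.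
  by rewrite (phiM (2 * s)) (phiM 2 s) phi_nat ps h1; ring.
- case: (case1 px) => _ h1 h2 _ _.
  apply: H2.
    by rewrite (phiM (2 * s)) (phiM 2 s) phi_nat ps h2; ring.
  by rewrite (phiM (2 * s)) (phiM 2 s) phi_nat ps h1; ring.
Qed.

Lemma part_f1728 (hm : (l %% 5 = 4)%N \/ (l %% 5 = 1)%N)
  (hleg : forall c : 'F_l, c ^+ 2 != - 4%:R) :
  ((l %% 5 = 4)%N -> splits_distinct (f1728 [the fieldType of 'F_l])) /\
  ((l %% 5 = 1)%N -> two_quad_factors (f1728 [the fieldType of 'F_l])).
Proof.
have l5 := l_gt5 hl hm.
have nz n : (0 < n <= 5)%N -> n%:R != 0 :> 'F_l := natF_nz hl l5.
have [x [g0 [x5 px hg0 g02 [I1 I2 I3 I4 I5]]]] := common hm.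
have [s hs] := obtain_sqrt (- 4%:R).
have ps := sqrt_anti hleg hs.
have g0nz : g0 != 0.
  by apply: contra_neq (nz 5%N isT) => e; rewrite -g02 e expr2 mulr0.
pose a := 9 - g0; pose b := 9 + g0.
have n2 : 2 != 0 :> 'F_l := nz 2%N isT.
have nab : a != b.
  apply/eqP => e; have : b - a = 2 * g0 by rewrite /a /b; ring.
  by rewrite e subrr => /esym/eqP; rewrite mulf_eq0 (negPf n2) (negPf g0nz).
have Ef : f1728 [the fieldType of 'F_l] = Q a * Q b.
  have pa : (9 - g0)%:P = 9 - g0%:P :> {poly 'F_l}.
    by rewrite polyCB !polyC_natr.
  have pb : (9 + g0)%:P = 9 + g0%:P :> {poly 'F_l}.
    by rewrite [LHS]polyCD !polyC_natr.
  rewrite /f1728 /Q /a /b -!mul_polyC !polyC_natr pa pb (@f1728_gen _ (polyX _) (g0%:P)) //.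
  by rewrite -polyC_exp g02 polyC_natr.
have n18 : 18 != 0 :> 'F_l.
  by rewrite (_ : 18 = 2 * 3 * 3 :> 'F_l) ?mulf_neq0 ?nz // -!natrM.
have e2 : (5 - g0) * (5 + g0) = 20.
  by apply: (@eq_mod _ _ _ (g0 ^+ 2 - 5) (-1)); [ring | rewrite g02 subrr].
have n20 : 20 != 0 :> 'F_l.
  by rewrite (_ : 20 = 4 * 5 :> 'F_l) ?mulf_neq0 ?nz // -!natrM.
have nDa : a ^+ 2 + 4 != 0.
  have -> : a ^+ 2 + 4 = 18 * (5 - g0).
    by apply: (@eq_mod _ _ _ (g0 ^+ 2 - 5) 1); [rewrite /a; ring | rewrite g02 subrr].
  rewrite mulf_neq0 //; apply: contra_neq n20 => h.
  by rewrite -e2 h mul0r.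
have nDb : b ^+ 2 + 4 != 0.
  have -> : b ^+ 2 + 4 = 18 * (5 + g0).
    by apply: (@eq_mod _ _ _ (g0 ^+ 2 - 5) 1); [rewrite /b; ring | rewrite g02 subrr].
  rewrite mulf_neq0 //; apply: contra_neq n20 => h.
  by rewrite -e2 h mulr0.
have hya : (3 * s * u2 x) ^+ 2 = iota (a ^+ 2 + 4).
  rewrite /a rmorphD rmorphXn rmorphB !rmorph_nat hg0 !exprMn hs.
  by apply: (@eq_mod2 _ _ _ _ _ (-1) (-9) _ I1 I5); rewrite /u2 /u1 /g5; ring.
have hyb : (3 * s * u1 x) ^+ 2 = iota (b ^+ 2 + 4).
  rewrite /b rmorphD rmorphXn rmorphD !rmorph_nat hg0 !exprMn hs.
  by apply: (@eq_mod2 _ _ _ _ _ (-1) (-9) _ I1 I4); rewrite /u2 /u1 /g5; ring.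
have [H1 H2] := final n2 nab Ef nDa nDb hya hyb.
split => e; rewrite e in px.
- case: (case4 x5 px) => _ _ _ h1 h2.
  apply: H1.
    by rewrite (phiM (3 * s)) (phiM 3 s) phi_nat ps h2; ring.
  by rewrite (phiM (3 * s)) (phiM 3 s) phi_nat ps h1; ring.
- case: (case1 px) => _ _ _ h1 h2.
  apply: H2.
    by rewrite (phiM (3 * s)) (phiM 3 s) phi_nat ps h2; ring.
  by rewrite (phiM (3 * s)) (phiM 3 s) phi_nat ps h1; ring.
Qed.

End Main.

Theorem proposition2p1 (l : nat) (hl : prime l) :
  [/\ (l %% 5 = 4)%N -> legendre (-3) l = -1 -> splits_distinct (f0 [the fieldType of 'F_l]),
      (l %% 5 = 4)%N -> legendre (-4) l = -1 -> splits_distinct (f1728 [the fieldType of 'F_l]),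
      (l %% 5 = 1)%N -> legendre (-3) l = -1 -> two_quad_factors (f0 [the fieldType of 'F_l]) &
      (l %% 5 = 1)%N -> legendre (-4) l = -1 -> two_quad_factors (f1728 [the fieldType of 'F_l])].
Proof.
have [K [iota _]] := countable_algebraic_closure 'F_l.
split => hm hleg.
- exact: (part_f0 hl iota (or_introl hm) (leg_nsq hl hleg)).1 hm.
- exact: (part_f1728 hl iota (or_introl hm) (leg_nsq hl hleg)).1 hm.
- exact: (part_f0 hl iota (or_intror hm) (leg_nsq hl hleg)).2 hm.
- exact: (part_f1728 hl iota (or_intror hm) (leg_nsq hl hleg)).2 hm.
Qed.
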